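(* Let $m\geq 1$ and let $h:\mathbb{A}\to{}^m\mathbb{A}$ be an embedding such that $h[\mathbb{A}]$ is a $G_\delta$ subset of ${}^m\mathbb{A}$. Then there exists a pairwise disjoint sequence $J_n$ ($n\in\omega$) of clopen intervals of $\mathbb{A}$ such that $\bigcup_{n\in\omega}J_n$ is dense in $\mathbb{A}$ and for each $n$ there is $j\in m$ such that $J_n$ is $j$-good for $h$.
   Context: Let $\mathbb{A}_0=\,]0,1]\times\{0\}$, $\mathbb{A}_1=[0,1[\,\times\{1\}$ and $\mathbb{A}=\mathbb{A}_0\cup\mathbb{A}_1$, ordered lexicographically: $\langle a,r\rangle\prec\langle b,s\rangle$ iff $a<b$, or $a=b$ and $r<s$; $\mathbb{A}$ (the double arrow space) carries the order topology. ${}^m\mathbb{A}$ is the $m$-th power with the product topology, elements viewed as functions $m=\{0,\dots,m-1\}\to\mathbb{A}$; $\pi_j:{}^m\mathbb{A}\to\mathbb{A}$ is the $j$-th projection and $h_j=\pi_j\circ h$. A clopen interval is a nonempty convex subset of $\mathbb{A}$ that is clopen. A partial function is strictly monotone if it is strictly increasing or strictly decreasing. For $h:\mathbb{A}\to{}^m\mathbb{A}$ and $j_0\in m$, a clopen interval $J$ is $j_0$-good for $h$ if $h_{j_0}\restriction J$ is strictly monotone and $h_j\restriction J$ is constant for every $j\in m\setminus\{j_0\}$. *)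

(* Defs.v *)
From Stdlib Require Import Reals.
From mathcomp Require Import ssreflect ssrfun ssrbool eqtype ssrnat fintype.

Set Implicit Arguments.
Unset Strict Implicit.
Unset Printing Implicit Defensive.

Local Open Scope R_scope.

(* The double arrow space: A0 = ]0,1] x {0}, A1 = [0,1[ x {1};
   the second coordinate 0 is encoded as false, 1 as true. *)
Definition in_dbl (p : R * bool) : Prop :=
  if p.2 then 0 <= p.1 < 1 else 0 < p.1 <= 1.

Definition DA := { p : R * bool | in_dbl p }.

Definition DA_lt (x y : DA) : Prop :=
  (proj1_sig x).1 < (proj1_sig y).1 \/
  ((proj1_sig x).1 = (proj1_sig y).1 /\ (proj1_sig x).2 = false /\ (proj1_sig y).2 = true).

Definition DA_le (x y : DA) : Prop := DA_lt x y \/ x = y.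

Definition DA_open (U : DA -> Prop) : Prop :=
  forall x, U x ->
    ((forall y, DA_le x y) \/
       exists a, DA_lt a x /\ forall y, DA_lt a y -> DA_le y x -> U y) /\
    ((forall y, DA_le y x) \/
       exists b, DA_lt x b /\ forall y, DA_le x y -> DA_lt y b -> U y).

Definition prod_open (m : nat) (W : ('I_m -> DA) -> Prop) : Prop :=
  forall f, W f ->
    exists U : 'I_m -> DA -> Prop,
      (forall j, DA_open (U j) /\ U j (f j)) /\
      (forall g, (forall j, U j (g j)) -> W g).

Definition embedding (m : nat) (h : DA -> 'I_m -> DA) : Prop :=
  (forall x y, h x = h y -> x = y) /\
  (forall W, prod_open W -> DA_open (fun x => W (h x))) /\
  (forall U, DA_open U -> exists W, prod_open W /\ forall x, U x <-> W (h x)).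

Definition G_delta (m : nat) (S : ('I_m -> DA) -> Prop) : Prop :=
  exists W : nat -> ('I_m -> DA) -> Prop,
    (forall n, prod_open (W n)) /\ forall f, S f <-> forall n, W n f.

Definition image_of (m : nat) (h : DA -> 'I_m -> DA) : ('I_m -> DA) -> Prop :=
  fun f => exists x, h x = f.

Definition clopen_interval (J : DA -> Prop) : Prop :=
  (exists x, J x) /\
  (forall x y z, J x -> J z -> DA_le x y -> DA_le y z -> J y) /\
  DA_open J /\ DA_open (fun x => ~ J x).

Definition strictly_monotone_on (J : DA -> Prop) (g : DA -> DA) : Prop :=
  (forall x y, J x -> J y -> DA_lt x y -> DA_lt (g x) (g y)) \/
  (forall x y, J x -> J y -> DA_lt x y -> DA_lt (g y) (g x)).

Definition constant_on (J : DA -> Prop) (g : DA -> DA) : Prop :=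
  forall x y, J x -> J y -> g x = g y.

Definition good (m : nat) (h : DA -> 'I_m -> DA) (j0 : 'I_m) (J : DA -> Prop) : Prop :=
  clopen_interval J /\
  strictly_monotone_on J (fun x => h x j0) /\
  (forall j : 'I_m, j <> j0 -> constant_on J (fun x => h x j)).

Definition dense (D : DA -> Prop) : Prop :=
  forall U, DA_open U -> (exists x, U x) -> exists x, U x /\ D x.

(* Main.v *)
Require Import Defs.
From Stdlib Require Import Reals ZArith.
From mathcomp Require Import ssreflect ssrfun ssrbool eqtype ssrnat fintype.
From Stdlib Require List.
From Stdlib Require Import Lia Lra Classical ClassicalEpsilon ProofIrrelevance FunctionalExtensionality IndefiniteDescription.

Local Open Scope R_scope.

Definition px (x : DA) : R := (proj1_sig x).1.
Definition sx (x : DA) : bool := (proj1_sig x).2.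

Lemma DA_eq x y : px x = px y -> sx x = sx y -> x = y.
Proof.
  destruct x as [[a s] H], y as [[b t] H']; unfold px, sx; simpl; intros E1 E2.
  subst. f_equal. apply proof_irrelevance.
Qed.

Lemma in_dbl_x x : in_dbl (px x, sx x).
Proof. destruct x as [[a s] H]; exact H. Qed.

Lemma px_bounds x : 0 <= px x <= 1.
Proof. generalize (in_dbl_x x); unfold in_dbl; simpl; destruct (sx x); lra. Qed.

Lemma px0 x : px x = 0 -> sx x = true.
Proof. generalize (in_dbl_x x); unfold in_dbl; simpl; destruct (sx x); lra. Qed.

Lemma px1 x : px x = 1 -> sx x = false.
Proof. generalize (in_dbl_x x); unfold in_dbl; simpl; destruct (sx x); lra. Qed.

Lemma lt_iff x y : DA_lt x y <-> px x < px y \/ (px x = px y /\ sx x = false /\ sx y = true).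
Proof. unfold DA_lt, px, sx; tauto. Qed.

Lemma in01 a s : 0 < a < 1 -> in_dbl (a,s).
Proof. destruct s; unfold in_dbl; simpl; lra. Qed.

Lemma in_dbl_1 : in_dbl (1, false).
Proof. unfold in_dbl; simpl; lra. Qed.

Definition dflt : DA := exist _ (1, false) in_dbl_1.

Definition mk (a : R) (s : bool) : DA :=
  match excluded_middle_informative (in_dbl (a,s)) with
  | left H => exist _ (a,s) H
  | right _ => dflt end.

Lemma mk_px a s : in_dbl (a,s) -> px (mk a s) = a.
Proof. intro H; unfold mk; destruct (excluded_middle_informative _); [reflexivity|contradiction]. Qed.
Lemma mk_sx a s : in_dbl (a,s) -> sx (mk a s) = s.
Proof. intro H; unfold mk; destruct (excluded_middle_informative _); [reflexivity|contradiction]. Qed.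

Lemma mk_eta x : x = mk (px x) (sx x).
Proof.
  have H := in_dbl_x x.
  apply DA_eq; [rewrite mk_px // | rewrite mk_sx //].
Qed.

Lemma mk_px' a s : 0 < a < 1 -> px (mk a s) = a.
Proof. intro; apply mk_px, in01; auto. Qed.
Lemma mk_sx' a s : 0 < a < 1 -> sx (mk a s) = s.
Proof. intro; apply mk_sx, in01; auto. Qed.

Lemma lt_irrefl x : ~ DA_lt x x.
Proof. rewrite lt_iff; intros [H|[_ [H1 H2]]]; [lra| congruence]. Qed.

Lemma lt_trans x y z : DA_lt x y -> DA_lt y z -> DA_lt x z.
Proof.
  rewrite !lt_iff; intros [H|[H1 [H2 H3]]] [K|[K1 [K2 K3]]]; try (left; lra).
  all: congruence.
Qed.

Lemma trich x y : DA_lt x y \/ x = y \/ DA_lt y x.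
Proof.
  rewrite !lt_iff.
  destruct (total_order_T (px x) (px y)) as [[H|H]|H]; try tauto.
  destruct (sx x) eqn:E1, (sx y) eqn:E2.
  - right; left; apply DA_eq; congruence.
  - right; right; right; auto.
  - left; right; auto.
  - right; left; apply DA_eq; congruence.
Qed.

Lemma le_px x y : DA_le x y -> px x <= px y.
Proof. intros [H|H]; [rewrite lt_iff in H; lra| subst; lra]. Qed.

Lemma lt_px x y : DA_lt x y -> px x <= px y.
Proof. intro H; apply le_px; left; auto. Qed.

Lemma le_trans x y z : DA_le x y -> DA_le y z -> DA_le x z.
Proof.
  intros [H|H] [K|K]; subst; try (right; reflexivity); left; auto.
  eapply lt_trans; eauto.
Qed.

Lemma lt_le_trans x y z : DA_lt x y -> DA_le y z -> DA_lt x z.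
Proof. intros H [K|K]; subst; auto; eapply lt_trans; eauto. Qed.

Lemma le_lt_trans x y z : DA_le x y -> DA_lt y z -> DA_lt x z.
Proof. intros [H|H] K; subst; auto; eapply lt_trans; eauto. Qed.

Lemma le_antisym x y : DA_le x y -> DA_le y x -> x = y.
Proof.
  intros [H|H] [K|K]; auto. destruct (lt_irrefl _ (lt_trans _ _ _ H K)).
Qed.

Lemma not_lt_le x y : ~ DA_lt x y -> DA_le y x.
Proof. intro H; destruct (trich x y) as [K|[K|K]]; [contradiction| right; auto| left; auto]. Qed.

Lemma le_refl x : DA_le x x.
Proof. right; reflexivity. Qed.

Lemma lt_not_le x y : DA_lt x y -> ~ DA_le y x.
Proof. intros H K. destruct (lt_irrefl _ (lt_le_trans _ _ _ H K)). Qed.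

Lemma ex_above x : (forall y, DA_le y x) \/ exists b, DA_lt x b.
Proof.
  destruct (classic (exists b, DA_lt x b)) as [H|H]; [right; auto| left].
  intro y; apply not_lt_le; intro K; apply H; eauto.
Qed.

Lemma ex_below x : (forall y, DA_le x y) \/ exists a, DA_lt a x.
Proof.
  destruct (classic (exists a, DA_lt a x)) as [H|H]; [right; auto| left].
  intro y; apply not_lt_le; intro K; apply H; eauto.
Qed.

Lemma mk_lt a b s t : 0 < a < 1 -> 0 < b < 1 -> a < b -> DA_lt (mk a s) (mk b t).
Proof. intros; rewrite lt_iff mk_px' // mk_px' //; left; auto. Qed.

Lemma twins_lt a : 0 < a < 1 -> DA_lt (mk a false) (mk a true).
Proof. intros; rewrite lt_iff mk_px' // mk_px' // mk_sx' // mk_sx' //; right; auto. Qed.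

Lemma twins_ne a : 0 < a < 1 -> mk a false <> mk a true.
Proof. intros H E. have := twins_lt _ H. rewrite E. apply lt_irrefl. Qed.

Lemma twins_split a w : 0 < a < 1 -> DA_le w (mk a false) \/ DA_le (mk a true) w.
Proof.
  intro Ha. destruct (trich w (mk a false)) as [H|[H|H]]; [left; left; auto| left; right; auto|].
  right. rewrite lt_iff mk_px' // mk_sx' // in H.
  destruct (trich (mk a true) w) as [K|[K|K]]; [left; auto| right; auto|].
  rewrite lt_iff mk_px' // mk_sx' // in K. exfalso.
  destruct H as [H|[H1 [H2 H3]]]; destruct K as [K|[K1 [K2 K3]]]; try lra; congruence.
Qed.
Lemma le_iff x y : DA_le x y <-> px x < px y \/ (px x = px y /\ (sx x = false \/ sx y = true)).
Proof.
  unfold DA_le; rewrite lt_iff. split.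
  - intros [[H|[H1 [H2 H3]]]|H]; [left; auto| right; split; auto| subst; right; split; auto].
    destruct (sx y); auto.
  - intros [H|[H1 [H2|H2]]]; [left; left; auto| |].
    + destruct (sx y) eqn:E; [left; right; auto| right; apply DA_eq; congruence].
    + destruct (sx x) eqn:E; [right; apply DA_eq; congruence| left; right; auto].
Qed.

Definition LeftOK (U : DA -> Prop) x :=
  (forall y, DA_le x y) \/ exists a, DA_lt a x /\ forall y, DA_lt a y -> DA_le y x -> U y.
Definition RightOK (U : DA -> Prop) x :=
  (forall y, DA_le y x) \/ exists b, DA_lt x b /\ forall y, DA_le x y -> DA_lt y b -> U y.

Lemma open_iff U : DA_open U <-> forall x, U x -> LeftOK U x /\ RightOK U x.
Proof. reflexivity. Qed.

Lemma LeftOK_mono (U V : DA -> Prop) x : (forall y, U y -> V y) -> LeftOK U x -> LeftOK V x.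
Proof. intros H [A|[a [A1 A2]]]; [left; auto| right; exists a; split; auto]. Qed.
Lemma RightOK_mono (U V : DA -> Prop) x : (forall y, U y -> V y) -> RightOK U x -> RightOK V x.
Proof. intros H [A|[a [A1 A2]]]; [left; auto| right; exists a; split; auto]. Qed.

Lemma LeftOK_inter (U V : DA -> Prop) x : LeftOK U x -> LeftOK V x -> LeftOK (fun y => U y /\ V y) x.
Proof.
  intros [A|[a1 [A1 A2]]]; [left; auto|]. intros [B|[a2 [B1 B2]]]; [left; auto|].
  right. destruct (trich a1 a2) as [H|[H|H]].
  - exists a2; split; auto. intros y H1 H2; split; auto. apply A2; auto. eapply lt_trans; eauto.
  - subst. exists a2; split; auto.
  - exists a1; split; auto. intros y H1 H2; split; auto. apply B2; auto. eapply lt_trans; eauto.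
Qed.

Lemma RightOK_inter (U V : DA -> Prop) x : RightOK U x -> RightOK V x -> RightOK (fun y => U y /\ V y) x.
Proof.
  intros [A|[a1 [A1 A2]]]; [left; auto|]. intros [B|[a2 [B1 B2]]]; [left; auto|].
  right. destruct (trich a1 a2) as [H|[H|H]].
  - exists a1; split; auto. intros y H1 H2; split; auto. apply B2; auto. eapply lt_trans; eauto.
  - subst. exists a2; split; auto.
  - exists a2; split; auto. intros y H1 H2; split; auto. apply A2; auto. eapply lt_trans; eauto.
Qed.

Lemma open_ext (U V : DA -> Prop) : (forall x, U x <-> V x) -> DA_open U -> DA_open V.
Proof.
  intros E H x Hx. apply E in Hx. destruct (H x Hx) as [A B]. split.
  - eapply LeftOK_mono; [|exact A]. intros; apply E; auto.
  - eapply RightOK_mono; [|exact B]. intros; apply E; auto.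
Qed.

Lemma open_inter (U V : DA -> Prop) : DA_open U -> DA_open V -> DA_open (fun x => U x /\ V x).
Proof.
  intros HU HV x [Ux Vx]. destruct (HU x Ux), (HV x Vx); split.
  - apply LeftOK_inter; auto.
  - apply RightOK_inter; auto.
Qed.

Lemma open_union (U V : DA -> Prop) : DA_open U -> DA_open V -> DA_open (fun x => U x \/ V x).
Proof.
  intros HU HV x [Ux|Vx]; [destruct (HU x Ux)| destruct (HV x Vx)]; split;
  first [eapply LeftOK_mono | eapply RightOK_mono]; try eassumption; simpl; auto.
Qed.

Lemma open_True : DA_open (fun _ => True).
Proof.
  intros x _; split.
  - destruct (ex_below x) as [H|[a H]]; [left; auto| right; exists a; auto].
  - destruct (ex_above x) as [H|[a H]]; [left; auto| right; exists a; auto].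
Qed.

Lemma open_gt q : DA_open (fun u => DA_lt q u).
Proof.
  intros x Hx; split.
  - right; exists q; split; auto.
  - destruct (ex_above x) as [H|[b H]]; [left; auto| right; exists b; split; auto].
    intros y Hy _. eapply lt_le_trans; eauto.
Qed.

Lemma open_lt q : DA_open (fun u => DA_lt u q).
Proof.
  intros x Hx; split.
  - destruct (ex_below x) as [H|[a H]]; [left; auto| right; exists a; split; auto].
    intros y _ Hy. eapply le_lt_trans; eauto.
  - right; exists q; split; auto.
Qed.

Lemma open_ge p : sx p = true -> DA_open (fun u => DA_le p u).
Proof.
  intros Hp x Hx. split.
  - destruct Hx as [Hx|Hx].
    + right; exists p; split; auto. intros y Hy _; left; auto.
    + subst x. destruct (Req_dec (px p) 0) as [E|E].
      * left. intro y. rewrite le_iff. have := px_bounds y. have := px0 y.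
        destruct (Req_dec (px y) 0); [right; split; [lra| right; auto]| left; lra].
      * right. have Hb := px_bounds p.
        have Hp1: px p < 1 by (destruct (Req_dec (px p) 1) as [E1|E1]; [have := px1 _ E1; congruence| lra]).
        have I1 : 0 < px p < 1 by lra.
        exists (mk (px p) false). split.
        -- rewrite lt_iff mk_px' // mk_sx' //. right; auto.
        -- intros y H1 H2. rewrite lt_iff mk_px' // mk_sx' // in H1.
           have := le_px _ _ H2. rewrite le_iff.
           destruct H1 as [H1|[H1 [_ H3]]]; [lra| right; split; auto].
  - destruct (ex_above x) as [H|[b H]]; [left; auto| right; exists b; split; auto].
    intros y Hy _. eapply le_trans; eauto.
Qed.

Lemma open_le p : sx p = false -> DA_open (fun u => DA_le u p).
Proof.
  intros Hp x Hx. split.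
  - destruct (ex_below x) as [H|[a H]]; [left; auto| right; exists a; split; auto].
    intros y _ Hy. eapply le_trans; eauto.
  - destruct Hx as [Hx|Hx].
    + right; exists p; split; auto. intros y _ Hy; left; auto.
    + subst x. destruct (Req_dec (px p) 1) as [E|E].
      * left. intro y. rewrite le_iff. have := px_bounds y. have := px1 y.
        destruct (Req_dec (px y) 1); [right; split; [lra| left; auto]| left; lra].
      * right. have Hb := px_bounds p.
        have Hp1: 0 < px p by (destruct (Req_dec (px p) 0) as [E1|E1]; [have := px0 _ E1; congruence| lra]).
        have I1 : 0 < px p < 1 by lra.
        exists (mk (px p) true). split.
        -- rewrite lt_iff mk_px' // mk_sx' //. right; auto.
        -- intros y H1 H2. rewrite lt_iff mk_px' // mk_sx' // in H2.
           have := le_px _ _ H1. rewrite le_iff.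
           destruct H2 as [H2|[H2 [H3 _]]]; [lra| right; split; auto].
Qed.

Lemma right_nbhd U a : DA_open U -> U (mk a true) -> 0 < a < 1 ->
  exists e, a < e /\ forall t s, a < t < e -> t < 1 -> U (mk t s).
Proof.
  intros HU Ha Ha1. destruct (HU _ Ha) as [_ [H|[b [H1 H2]]]].
  - exfalso. have := H (mk ((a+1)/2) true). intro K. have := le_px _ _ K.
    rewrite !mk_px'; lra.
  - exists (px b). rewrite lt_iff mk_px' // mk_sx' // in H1. split.
    + destruct H1 as [H1|[_ [H1 _]]]; [lra| discriminate].
    + intros t s Ht Ht1. have Ht' : 0 < t < 1 by lra. apply H2.
      * left. rewrite lt_iff mk_px' // mk_px' //. left; lra.
      * rewrite lt_iff mk_px' //. left; lra.
Qed.

Lemma left_nbhd U a : DA_open U -> U (mk a false) -> 0 < a < 1 ->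
  exists e, e < a /\ forall t s, e < t < a -> 0 < t -> U (mk t s).
Proof.
  intros HU Ha Ha1. destruct (HU _ Ha) as [[H|[b [H1 H2]]] _].
  - exfalso. have := H (mk (a/2) true). intro K. have := le_px _ _ K.
    rewrite !mk_px'; lra.
  - exists (px b). rewrite lt_iff mk_px' // mk_sx' // in H1. split.
    + destruct H1 as [H1|[_ [_ H1]]]; [lra| discriminate].
    + intros t s Ht Ht1. have Ht' : 0 < t < 1 by lra. apply H2.
      * rewrite lt_iff mk_px' //. left; lra.
      * left. rewrite lt_iff mk_px' // mk_px' //. left; lra.
Qed.
Ltac solve_disj := first [ lra | discriminate | reflexivity | (left; solve_disj) | (right; solve_disj) | (split; solve_disj) ].
Ltac des := repeat match goal with H: _ \/ _ |- _ => destruct H | H : _ /\ _ |- _ => destruct H end.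

Definition Bas (c d : R) : DA -> Prop := fun x =>
  (c < px x < d) \/ (px x = c /\ sx x = true) \/ (px x = d /\ sx x = false).

Lemma in_c c : 0 <= c < 1 -> in_dbl (c, true).
Proof. unfold in_dbl; simpl; lra. Qed.
Lemma in_d d : 0 < d <= 1 -> in_dbl (d, false).
Proof. unfold in_dbl; simpl; lra. Qed.

Lemma Bas_iff c d y : 0 <= c < d -> d <= 1 ->
  (Bas c d y <-> DA_le (mk c true) y /\ DA_le y (mk d false)).
Proof.
  intros H1 H2. have i1 := in_c c ltac:(lra). have i2 := in_d d ltac:(lra).
  rewrite !le_iff mk_px // mk_sx // mk_px // mk_sx //. unfold Bas.
  destruct (sx y); split; intros; des; solve_disj.
Qed.

Lemma Bas_px c d x : c < d -> Bas c d x -> c <= px x <= d.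
Proof. unfold Bas; intros; des; lra. Qed.

Lemma Bas_sub c d c' d' x : c <= c' -> c' < d' -> d' <= d -> Bas c' d' x -> Bas c d x.
Proof.
  unfold Bas; intros; destruct (sx x); des; try discriminate;
  destruct (Req_dec c c'); destruct (Req_dec d d'); solve_disj.
Qed.

Lemma Bas_mk c d t s : 0 <= c -> d <= 1 -> c < t < d -> Bas c d (mk t s).
Proof. intros; left; rewrite mk_px'; lra. Qed.

Lemma Bas_clopen c d : 0 <= c < d -> d <= 1 -> clopen_interval (Bas c d).
Proof.
  intros H1 H2. split; [|split; [|split]].
  - exists (mk ((c+d)/2) true). apply Bas_mk; lra.
  - intros x y z Hx Hz Hxy Hyz. apply (proj1 (Bas_iff c d x H1 H2)) in Hx.
    apply (proj1 (Bas_iff c d z H1 H2)) in Hz. apply (proj2 (Bas_iff c d y H1 H2)).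
    destruct Hx, Hz. split; [apply (le_trans _ x) | apply (le_trans _ z)]; auto.
  - eapply open_ext; [intro x; symmetry; apply Bas_iff; auto|].
    apply open_inter; [apply open_ge| apply open_le]; apply mk_sx; [apply in_c|apply in_d]; lra.
  - eapply open_ext; [|apply (open_union _ _ (open_lt (mk c true)) (open_gt (mk d false)))].
    intro x. rewrite Bas_iff //. split.
    + intros [K|K] [K1 K2]; [apply (lt_not_le _ _ K K1)| apply (lt_not_le _ _ K K2)].
    + intro K. destruct (classic (DA_le (mk c true) x)) as [A|A].
      * right. destruct (trich (mk d false) x) as [B|[B|B]]; auto; exfalso; apply K; split; auto.
        -- subst; apply le_refl.
        -- left; auto.
      * left. destruct (trich x (mk c true)) as [B|[B|B]]; auto; exfalso; apply A.
        -- subst; apply le_refl.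
        -- left; auto.
Qed.
Fixpoint iterI (st : nat -> R * R -> R * R) (p0 : R * R) (n : nat) : R * R :=
  match n with O => p0 | S n => st n (iterI st p0 n) end.

Lemma baire (E : nat -> R -> Prop) c d : c < d ->
  (forall r u v, c <= u -> u < v -> v <= d -> exists u' v', u <= u' /\ u' < v' /\ v' <= v /\
      forall x, u' <= x <= v' -> ~ E r x) ->
  exists x, c <= x <= d /\ forall r, ~ E r x.
Proof.
  intros Hcd H.
  have G : forall r (p : R * R), exists q : R * R,
      (c <= fst p -> fst p < snd p -> snd p <= d ->
       fst p <= fst q /\ fst q < snd q /\ snd q <= snd p /\ forall x, fst q <= x <= snd q -> ~ E r x).
  { intros r [u v]. destruct (classic (c <= u /\ u < v /\ v <= d)) as [K|K].
    - destruct K as [K1 [K2 K3]]. destruct (H r u v K1 K2 K3) as [u' [v' P]].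
      exists (u', v'); simpl; intros; auto.
    - exists (u, v); simpl; intros; exfalso; tauto. }
  set st := fun r p => proj1_sig (constructive_indefinite_description _ (G r p)).
  have Hst : forall r p, c <= fst p -> fst p < snd p -> snd p <= d ->
       fst p <= fst (st r p) /\ fst (st r p) < snd (st r p) /\ snd (st r p) <= snd p /\
       forall x, fst (st r p) <= x <= snd (st r p) -> ~ E r x.
  { intros r p. exact (proj2_sig (constructive_indefinite_description _ (G r p))). }
  set sq := iterI st (c, d).
  have Inv : forall n, c <= fst (sq n) /\ fst (sq n) < snd (sq n) /\ snd (sq n) <= d.
  { induction n as [|n IH]; [simpl; lra|]. destruct IH as [A [B C]].
    change (sq (S n)) with (st n (sq n)).
    destruct (Hst n (sq n) A B C) as [A' [B' [C' _]]]. lra. }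
  have Step : forall n, fst (sq n) <= fst (sq (S n)) /\ snd (sq (S n)) <= snd (sq n).
  { intro n. destruct (Inv n) as [A [B C]]. change (sq (S n)) with (st n (sq n)).
    destruct (Hst n (sq n) A B C) as [A' [B' [C' _]]]. lra. }
  have Mono : forall n k, fst (sq n) <= fst (sq (Nat.add n k)) /\ snd (sq (Nat.add n k)) <= snd (sq n).
  { intros n k. induction k as [|k IH].
    - rewrite Nat.add_0_r. lra.
    - rewrite Nat.add_succ_r. have := Step (Nat.add n k). lra. }
  have Cross : forall n k, fst (sq n) <= snd (sq k).
  { intros n k. have Ec := Nat.add_comm n k. have M1 := Mono n k. have M2 := Mono k n.
    rewrite -Ec in M2. have := Inv (Nat.add n k). lra. }
  set Ef := fun x => exists n, x = fst (sq n).
  have Hb : bound Ef.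
  { exists d. intros x [n ->]. have := Inv n. lra. }
  have Hne : exists x, Ef x by (exists c; exists O; reflexivity).
  destruct (completeness Ef Hb Hne) as [x [Hub Hlub]].
  have L1 : forall n, fst (sq n) <= x by (intro n; apply Hub; exists n; auto).
  have L2 : forall k, x <= snd (sq k).
  { intro k. apply Hlub. intros y [n ->]. apply Cross. }
  exists x. split.
  - have := L1 O. have := L2 O. simpl. lra.
  - intro r. destruct (Inv r) as [A [B C]].
    destruct (Hst r (sq r) A B C) as [_ [_ [_ D]]]. apply D.
    have := L1 (S r). have := L2 (S r). change (sq (S r)) with (st r (sq r)). lra.
Qed.

Lemma nestedQ (Q : nat -> R -> Prop) c d : c < d ->
  (forall a n, c <= a <= d -> exists del, 0 < del /\ forall a', a < a' < a + del -> Q n a') ->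
  exists x, c <= x <= d /\ forall n, Q n x.
Proof.
  intros Hcd H.
  destruct (baire (fun n x => ~ Q n x) c d Hcd) as [x [Hx Hx']].
  - intros r u v H1 H2 H3. destruct (H u r ltac:(lra)) as [del [Hd Hd']].
    set e := Rmin del (v - u). have He : 0 < e by (apply Rmin_glb_lt; lra).
    have He1 : e <= del by apply Rmin_l. have He2 : e <= v - u by apply Rmin_r.
    exists (u + e/3), (u + 2*e/3). repeat split; try lra.
    intros y Hy K. apply K, Hd'. lra.
  - exists x; split; auto. intro n; apply NNPP, Hx'.
Qed.
Definition cont (f : DA -> DA) := forall U, DA_open U -> DA_open (fun x => U (f x)).
Definition winc (K : DA -> Prop) (f : DA -> DA) := forall x y, K x -> K y -> DA_le x y -> DA_le (f x) (f y).
Definition wdec (K : DA -> Prop) (f : DA -> DA) := forall x y, K x -> K y -> DA_le x y -> DA_le (f y) (f x).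
Definition wmono K f := winc K f \/ wdec K f.

Definition rev (x : DA) : DA := mk (1 - px x) (negb (sx x)).

Lemma in_rev x : in_dbl (1 - px x, negb (sx x)).
Proof. have := in_dbl_x x. unfold in_dbl; simpl. destruct (sx x); simpl; lra. Qed.
Lemma rev_px x : px (rev x) = 1 - px x.
Proof. unfold rev; rewrite mk_px //; apply in_rev. Qed.
Lemma rev_sx x : sx (rev x) = negb (sx x).
Proof. unfold rev; rewrite mk_sx //; apply in_rev. Qed.
Lemma rev_rev x : rev (rev x) = x.
Proof. apply DA_eq; rewrite ?rev_px ?rev_sx; [lra| destruct (sx x); auto]. Qed.
Lemma rev_lt x y : DA_lt (rev x) (rev y) <-> DA_lt y x.
Proof.
  rewrite !lt_iff !rev_px !rev_sx. destruct (sx x), (sx y); simpl; split; intros; des;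
  try discriminate; solve_disj.
Qed.
Lemma rev_le x y : DA_le (rev x) (rev y) <-> DA_le y x.
Proof.
  unfold DA_le. rewrite rev_lt. split; intros [H|H]; auto; right.
  - rewrite -(rev_rev y) -H rev_rev; auto.
  - rewrite H; auto.
Qed.

Lemma RL_rev U x : RightOK U (rev x) -> LeftOK (fun y => U (rev y)) x.
Proof.
  intros [A|[b [B1 B2]]].
  - left; intro y. apply (proj1 (rev_le _ _)), A.
  - right; exists (rev b); split.
    + apply (proj1 (rev_lt _ _)); rewrite rev_rev; auto.
    + intros y H1 H2. apply B2; [apply (proj2 (rev_le _ _)); auto|].
      rewrite <- (rev_rev b). apply (proj2 (rev_lt _ _)); auto.
Qed.

Lemma LR_rev U x : LeftOK U (rev x) -> RightOK (fun y => U (rev y)) x.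
Proof.
  intros [A|[b [B1 B2]]].
  - left; intro y. apply (proj1 (rev_le _ _)), A.
  - right; exists (rev b); split.
    + apply (proj1 (rev_lt _ _)); rewrite rev_rev; auto.
    + intros y H1 H2. apply B2; [|apply (proj2 (rev_le _ _)); auto].
      rewrite <- (rev_rev b). apply (proj2 (rev_lt _ _)); auto.
Qed.

Lemma cont_rev : cont rev.
Proof.
  intros U HU x Hx. destruct (HU _ Hx) as [A B]. split; [apply RL_rev| apply LR_rev]; auto.
Qed.

Lemma cont_comp f g : cont f -> cont g -> cont (fun x => f (g x)).
Proof. intros Hf Hg U HU. apply (Hg (fun y => U (f y))), Hf, HU. Qed.

Lemma winc_rev K f : winc K (fun x => rev (f x)) -> wdec K f.
Proof. intros H x y Kx Ky Hxy. apply (proj1 (rev_le _ _)), H; auto. Qed.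

Lemma local_sign f a : cont f -> 0 < a < 1 -> exists del, 0 < del /\ a + del <= 1 /\
  ((forall t s, a < t < a + del -> DA_le (f (mk a true)) (f (mk t s))) \/
   (forall t s, a < t < a + del -> DA_le (f (mk t s)) (f (mk a true)))).
Proof.
  intros Hf Ha. set p := f (mk a true).
  destruct (sx p) eqn:Ep.
  - have Ho := Hf _ (open_ge p Ep).
    destruct (right_nbhd _ a Ho (le_refl p) Ha) as [e [He He']].
    exists (Rmin (e - a) (1 - a)). have := Rmin_l (e - a) (1 - a). have := Rmin_r (e - a) (1 - a).
    intros R1 R2. split; [apply Rmin_glb_lt; lra| split; [lra|]].
    left. intros t s Ht. apply He'; lra.
  - have Ho := Hf _ (open_le p Ep).
    destruct (right_nbhd _ a Ho (le_refl p) Ha) as [e [He He']].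
    exists (Rmin (e - a) (1 - a)). have := Rmin_l (e - a) (1 - a). have := Rmin_r (e - a) (1 - a).
    intros R1 R2. split; [apply Rmin_glb_lt; lra| split; [lra|]].
    right. intros t s Ht. apply He'; lra.
Qed.

Definition E1 (f : DA -> DA) (k : nat) (a : R) :=
  forall t s, a < t < a + / (INR k + 1) -> t < 1 -> DA_le (f (mk a true)) (f (mk t s)).

Lemma INRk_pos k : 0 < / (INR k + 1).
Proof. apply Rinv_0_lt_compat. have := pos_INR k. lra. Qed.

Lemma dense_winc f k c d : cont f -> 0 < c -> c < d -> d < 1 -> d - c < / (INR k + 1) ->
  (forall p q, c <= p -> p < q -> q <= d -> exists a, p < a < q /\ E1 f k a) ->
  winc (Bas c d) f.
Proof.
  intros Hf Hc Hcd Hd Hlen Hden x y Hx Hy Hxy.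
  destruct Hxy as [Hxy| <-]; [|apply le_refl].
  apply not_lt_le; intro K.
  have Ho := Hf _ (open_gt (f y)).
  have Bx := Bas_px _ _ _ Hcd Hx. have By := Bas_px _ _ _ Hcd Hy.
  have Ey := mk_eta y.
  have Ex := mk_eta x.
  destruct (sx x) eqn:Sx.
  - have Hb : px x < d by (unfold Bas in Hx; rewrite Sx in Hx; des; try discriminate; lra).
    have Hb' : px x < px y by (rewrite lt_iff Sx in Hxy; des; try discriminate; lra).
    rewrite Ex in K.
    destruct (right_nbhd _ (px x) Ho K ltac:(lra)) as [e [He He']].
    destruct (Hden (px x) (Rmin e (px y))) as [a [Ha Ea]].
    + lra.
    + apply Rmin_glb_lt; lra.
    + have := Rmin_r e (px y). lra.
    + have := Rmin_l e (px y). have := Rmin_r e (px y). intros R1 R2.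
      have P := He' a true ltac:(lra) ltac:(lra).
      have Q := Ea (px y) (sx y) ltac:(lra) ltac:(lra).
      rewrite -Ey in Q. apply (lt_not_le _ _ P Q).
  - have Hb : c < px x by (unfold Bas in Hx; rewrite Sx in Hx; des; try discriminate; lra).
    have Hb' : px x <= px y by (apply le_px; left; auto).
    rewrite Ex in K.
    destruct (left_nbhd _ (px x) Ho K ltac:(lra)) as [e [He He']].
    destruct (Hden (Rmax e c) (px x)) as [a [Ha Ea]].
    + apply Rmax_r.
    + apply Rmax_lub_lt; lra.
    + lra.
    + have := Rmax_l e c. have := Rmax_r e c. intros R1 R2.
      have P := He' a true ltac:(lra) ltac:(lra).
      have Q := Ea (px y) (sx y) ltac:(lra) ltac:(lra).
      rewrite -Ey in Q. apply (lt_not_le _ _ P Q).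
Qed.

Lemma even_div2 k : Nat.even (Nat.add k k) = true /\ Nat.div2 (Nat.add k k) = k /\
  Nat.even (S (Nat.add k k)) = false /\ Nat.div2 (S (Nat.add k k)) = k.
Proof.
  induction k as [|k IH]; [simpl; auto|].
  rewrite Nat.add_succ_r. simpl. destruct IH as [A [B [C D]]]. rewrite A B. simpl in C, D.
  rewrite C D. auto.
Qed.

Lemma archi del : 0 < del -> exists k, / (INR k + 1) < del.
Proof.
  intro H. destruct (archimed_cor1 del H) as [N [H1 H2]]. exists N.
  eapply Rle_lt_trans; [|exact H1]. apply Rinv_le_contravar.
  - apply lt_0_INR. exact H2.
  - have := pos_INR N. lra.
Qed.
Lemma wlemma f al be : cont f -> 0 <= al -> al < be -> be <= 1 ->
  exists c d, al <= c /\ c < d /\ d <= be /\ wmono (Bas c d) f.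
Proof.
  intros Hf H0 Hab Hb1.
  set g := fun x => rev (f x).
  have Hg : cont g by (unfold g; apply (cont_comp rev f); [apply cont_rev| auto]).
  set E := fun r a => if Nat.even r then E1 f (Nat.div2 r) a else E1 g (Nat.div2 r) a.
  destruct (classic (exists r u v, (al + (be - al)/3) <= u /\ u < v /\ v <= (be - (be - al)/3) /\
      forall u' v', u <= u' -> u' < v' -> v' <= v -> exists x, u' <= x <= v' /\ E r x))
    as [[r [u [v [H1 [H2 [H3 H4]]]]]]|Hno].
  - set k := Nat.div2 r.
    have Hk := INRk_pos k.
    set v1 := Rmin v (u + / (INR k + 1) / 2).
    have R1 : v1 <= v := Rmin_l v (u + / (INR k + 1) / 2).
    have R2 : v1 <= u + / (INR k + 1) / 2 := Rmin_r v (u + / (INR k + 1) / 2).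
    have Huv1 : u < v1 by (apply Rmin_glb_lt; lra).
    have Hden : forall p q, u <= p -> p < q -> q <= v1 -> exists a, p < a < q /\ E r a.
    { intros p q Hp Hpq Hq.
      destruct (H4 (p + (q-p)/3) (q - (q-p)/3) ltac:(lra) ltac:(lra) ltac:(lra)) as [x [Hx Ex]].
      exists x; split; [lra| auto]. }
    exists u, v1. split; [lra| split; [lra| split; [lra|]]].
    unfold E in Hden. destruct (Nat.even r).
    + left. apply (dense_winc f k); try lra; auto.
    + right. apply winc_rev. apply (dense_winc g k); try lra; auto.
  - exfalso.
    destruct (baire E (al + (be - al)/3) (be - (be - al)/3)) as [x [Hx Hx']].
    + lra.
    + intros r u v Hu Huv Hv.
      destruct (classic (exists u' v', u <= u' /\ u' < v' /\ v' <= v /\ forall x, u' <= x <= v' -> ~ E r x)) as [Y|N]; [exact Y|].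
      exfalso; apply Hno. exists r, u, v. split; [lra| split; [lra| split; [lra|]]].
      intros u' v' A1 A2 A3. apply NNPP; intro NX. apply N. exists u', v'.
      split; [lra| split; [lra| split; [lra|]]]. intros y Hy Ey. apply NX. exists y; auto.
    + have Ha : 0 < x < 1 by lra.
      destruct (local_sign f x Hf Ha) as [del [Hd [Hd1 [Inc|Dec]]]];
      destruct (archi del Hd) as [k Hk]; have Hk0 := INRk_pos k;
      destruct (even_div2 k) as [A [B [C D]]].
      * apply (Hx' (Nat.add k k)). unfold E. rewrite A B. intros t s Ht _. apply Inc; lra.
      * apply (Hx' (S (Nat.add k k))). unfold E. rewrite C D. intros t s Ht _.
        apply (proj2 (rev_le _ _)), Dec; lra.
Qed.
Lemma cont_coord m (h : DA -> 'I_m -> DA) j :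
  (forall W, prod_open W -> DA_open (fun x => W (h x))) -> cont (fun x => h x j).
Proof.
  intros Hc U HU. apply (Hc (fun g => U (g j))). intros g Hg.
  exists (fun i => if i == j then U else fun _ => True). split.
  - intro i. case: eqP => [->|_]; split; auto. apply open_True.
  - intros g' Hg'. have := Hg' j. rewrite eqxx. auto.
Qed.

Lemma box_open m (V : 'I_m -> DA -> Prop) : (forall i, DA_open (V i)) ->
  prod_open (fun g => forall i, V i (g i)).
Proof. intros HV g Hg. exists V. split; auto. Qed.

Lemma const_region f c d u v p : 0 < c -> c <= u -> u < v -> v <= d -> d < 1 ->
  (forall t s, u < t < v -> f (mk t s) = p) ->
  constant_on (Bas (u + (v-u)/3) (v - (v-u)/3)) f.
Proof.
  intros H0 H1 H2 H3 H4 H x y Hx Hy.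
  have Bx := Bas_px (u + (v-u)/3) (v - (v-u)/3) x ltac:(lra) Hx.
  have By := Bas_px (u + (v-u)/3) (v - (v-u)/3) y ltac:(lra) Hy.
  rewrite (mk_eta x) (mk_eta y) !H; auto; lra.
Qed.

Lemma nc_contra f c d u v p :
  (forall c' d', c <= c' -> c' < d' -> d' <= d -> ~ constant_on (Bas c' d') f) ->
  0 < c -> c <= u -> u < v -> v <= d -> d < 1 ->
  (forall t s, u < t < v -> f (mk t s) = p) -> False.
Proof.
  intros Hnc H0 H1 H2 H3 H4 H. apply (Hnc (u + (v-u)/3) (v - (v-u)/3)); try lra.
  apply (const_region f c d u v p); auto.
Qed.

Lemma twin_ne f c d a : cont f -> 0 < c -> c < d -> d < 1 -> wmono (Bas c d) f ->
  (forall c' d', c <= c' -> c' < d' -> d' <= d -> ~ constant_on (Bas c' d') f) ->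
  c < a < d -> f (mk a false) <> f (mk a true).
Proof.
  intros Hf H0 H1 H2 Hm Hnc Ha E.
  have Ha1 : 0 < a < 1 by lra.
  set x0 := mk a false. set x1 := mk a true. set p := f x1.
  have B0 : Bas c d x0 by (apply Bas_mk; lra).
  have B1 : Bas c d x1 by (apply Bas_mk; lra).
  have L01 : DA_le x0 x1 by (left; apply twins_lt; auto).
  destruct (sx p) eqn:Sp.
  - have Ho := Hf _ (open_ge p Sp).
    destruct Hm as [Hm|Hm].
    + have Hx0 : DA_le p (f x0) by (rewrite E; apply le_refl).
      destruct (left_nbhd _ a Ho Hx0 Ha1) as [e [He He']].
      have Rm1 := Rmax_l e c. have Rm2 := Rmax_r e c.
      apply (nc_contra f c d (Rmax e c) a p Hnc H0 Rm2 ltac:(apply Rmax_lub_lt; lra) ltac:(lra) H2).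
      intros t s Ht. apply le_antisym.
      * rewrite /p -E. apply Hm; [apply Bas_mk; lra| auto| left; apply mk_lt; lra].
      * apply He'; lra.
    + have Hx1 : DA_le p (f x1) by apply le_refl.
      destruct (right_nbhd _ a Ho Hx1 Ha1) as [e [He He']].
      have Rm1 := Rmin_l e d. have Rm2 := Rmin_r e d.
      apply (nc_contra f c d a (Rmin e d) p Hnc H0 ltac:(lra) ltac:(apply Rmin_glb_lt; lra) Rm2 H2).
      intros t s Ht. apply le_antisym.
      * apply Hm; [auto| apply Bas_mk; lra| left; apply mk_lt; lra].
      * apply He'; lra.
  - have Ho := Hf _ (open_le p Sp).
    destruct Hm as [Hm|Hm].
    + have Hx1 : DA_le (f x1) p by apply le_refl.
      destruct (right_nbhd _ a Ho Hx1 Ha1) as [e [He He']].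
      have Rm1 := Rmin_l e d. have Rm2 := Rmin_r e d.
      apply (nc_contra f c d a (Rmin e d) p Hnc H0 ltac:(lra) ltac:(apply Rmin_glb_lt; lra) Rm2 H2).
      intros t s Ht. apply le_antisym.
      * apply He'; lra.
      * apply Hm; [auto| apply Bas_mk; lra| left; apply mk_lt; lra].
    + have Hx0 : DA_le (f x0) p by (rewrite E; apply le_refl).
      destruct (left_nbhd _ a Ho Hx0 Ha1) as [e [He He']].
      have Rm1 := Rmax_l e c. have Rm2 := Rmax_r e c.
      apply (nc_contra f c d (Rmax e c) a p Hnc H0 Rm2 ltac:(apply Rmax_lub_lt; lra) ltac:(lra) H2).
      intros t s Ht. apply le_antisym.
      * apply He'; lra.
      * rewrite /p -E. apply Hm; [apply Bas_mk; lra| auto| left; apply mk_lt; lra].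
Qed.

Lemma sandwich K f u v w : wmono K f -> K u -> K v -> K w -> DA_le u v -> DA_le v w ->
  f u = f w -> f u = f v.
Proof.
  intros [Hm|Hm] Ku Kv Kw H1 H2 E; apply le_antisym.
  - apply Hm; auto.
  - rewrite E; apply Hm; auto.
  - rewrite E; apply Hm; auto.
  - apply Hm; auto.
Qed.
Lemma gd_contra m (h : DA -> 'I_m -> DA) c d (j1 j2 : 'I_m) :
  embedding h -> G_delta (image_of h) -> 0 < c -> c < d -> d < 1 -> j1 <> j2 ->
  wmono (Bas c d) (fun x => h x j1) -> wmono (Bas c d) (fun x => h x j2) ->
  (forall a, c < a < d -> h (mk a false) j1 <> h (mk a true) j1) ->
  (forall a, c < a < d -> h (mk a false) j2 <> h (mk a true) j2) -> False.
Proof.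
  intros [Hinj [Hc Ho]] [Wn [HWn HWniff]] H0 H1 H2 Hj M1 M2 T1 T2.
  have Hcl := Bas_clopen c d ltac:(lra) ltac:(lra).
  destruct Hcl as [_ [_ [HBo _]]].
  destruct (Ho (Bas c d) HBo) as [W [HW HWiff]].
  set z := fun a (j : 'I_m) => if j == j2 then h (mk a true) j else h (mk a false) j.
  set Q := fun n a => Wn n (z a) /\ W (z a).
  destruct (nestedQ Q (c + (d-c)/3) (d - (d-c)/3)) as [x [Hx HQ]].
  - lra.
  - intros a n Ha.
    have Ha1 : 0 < a < 1 by lra.
    have I : image_of h (h (mk a true)) by (exists (mk a true); auto).
    have Wn1 := proj1 (HWniff _) I n.
    have W1 : W (h (mk a true)) by (apply (proj1 (HWiff _)); apply Bas_mk; lra).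
    destruct (HWn n _ Wn1) as [U [HU1 HU2]].
    destruct (HW _ W1) as [V [HV1 HV2]].
    have PU := Hc _ (box_open m U (fun i => proj1 (HU1 i))).
    have PV := Hc _ (box_open m V (fun i => proj1 (HV1 i))).
    destruct (right_nbhd _ a PU (fun i => proj2 (HU1 i)) Ha1) as [e1 [He1 He1']].
    destruct (right_nbhd _ a PV (fun i => proj2 (HV1 i)) Ha1) as [e2 [He2 He2']].
    set del := Rmin (Rmin (e1 - a) (e2 - a)) (d - a).
    have R1 : del <= Rmin (e1 - a) (e2 - a) := Rmin_l _ _.
    have R2 : del <= d - a := Rmin_r _ _.
    have R3 : Rmin (e1 - a) (e2 - a) <= e1 - a := Rmin_l _ _.
    have R4 : Rmin (e1 - a) (e2 - a) <= e2 - a := Rmin_r _ _.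
    exists del. split.
    + apply Rmin_glb_lt; [apply Rmin_glb_lt|]; lra.
    + intros a' Ha'. split.
      * apply HU2. intro i. rewrite /z. case: eqP => _.
        -- apply (He1' a' true); lra.
        -- apply (He1' a' false); lra.
      * apply HV2. intro i. rewrite /z. case: eqP => _.
        -- apply (He2' a' true); lra.
        -- apply (He2' a' false); lra.
  - have Hx1 : 0 < x < 1 by lra.
    have Im : image_of h (z x) by (apply (proj2 (HWniff _)); intro n; apply (HQ n)).
    destruct Im as [w Hw].
    have Bw : Bas c d w by (apply (proj2 (HWiff w)); rewrite Hw; apply (HQ O)).
    have E1 : h w j1 = h (mk x false) j1.
    { rewrite Hw /z. case: eqP => //; intro E; contradiction. }
    have E2 : h w j2 = h (mk x true) j2.
    { rewrite Hw /z. rewrite eqxx. auto. }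
    have B0 : Bas c d (mk x false) by (apply Bas_mk; lra).
    have B1 : Bas c d (mk x true) by (apply Bas_mk; lra).
    have L01 : DA_le (mk x false) (mk x true) by (left; apply twins_lt; auto).
    destruct (twins_split x w Hx1) as [L|L].
    + apply (T2 x ltac:(lra)).
      have S := sandwich _ _ _ _ _ M2 Bw B0 B1 L L01 E2.
      rewrite -S. auto.
    + apply (T1 x ltac:(lra)).
      have S := sandwich _ _ _ _ _ M1 B0 B1 Bw L01 L (Logic.eq_sym E1).
      auto.
Qed.
Definition Pj (f : DA -> DA) c d := constant_on (Bas c d) f \/
  (forall c' d', c <= c' -> c' < d' -> d' <= d -> ~ constant_on (Bas c' d') f).
Definition GoodC c d f := wmono (Bas c d) f /\ Pj f c d.

Lemma wmono_sub c d c' d' f : c <= c' -> c' < d' -> d' <= d -> wmono (Bas c d) f -> wmono (Bas c' d') f.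
Proof.
  intros H1 H2 H3 [Hm|Hm]; [left|right]; intros x y Hx Hy Hxy; apply Hm; auto;
  eapply Bas_sub; eauto.
Qed.

Lemma const_sub c d c' d' f : c <= c' -> c' < d' -> d' <= d -> constant_on (Bas c d) f -> constant_on (Bas c' d') f.
Proof. intros H1 H2 H3 Hm x y Hx Hy; apply Hm; eapply Bas_sub; eauto. Qed.

Lemma GoodC_sub c d c' d' f : c <= c' -> c' < d' -> d' <= d -> GoodC c d f -> GoodC c' d' f.
Proof.
  intros H1 H2 H3 [A [B|B]]; split; [eapply wmono_sub; eauto| left; eapply const_sub; eauto|
    eapply wmono_sub; eauto| right].
  intros c'' d'' K1 K2 K3. apply B; lra.
Qed.

Lemma step12 m (h : DA -> 'I_m -> DA) : (forall j, cont (fun x => h x j)) ->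
  forall n, (n <= m)%coq_nat -> forall c d, 0 < c -> c < d -> d < 1 ->
  exists c' d', c <= c' /\ c' < d' /\ d' <= d /\
    forall j : 'I_m, (nat_of_ord j < n)%coq_nat -> GoodC c' d' (fun x => h x j).
Proof.
  intros Hc n. induction n as [|n IH]; intros Hn c d H0 H1 H2.
  - exists c, d. split; [lra| split; [lra| split; [lra|]]]. intros j Hj. exfalso. inversion Hj.
  - destruct (IH ltac:(lia) c d H0 H1 H2) as [c1 [d1 [A1 [A2 [A3 A4]]]]].
    have Hnm : (n < m)%N by (apply/ltP; lia).
    set j0 := Ordinal Hnm.
    destruct (wlemma (fun x => h x j0) c1 d1 (Hc j0) ltac:(lra) A2 ltac:(lra)) as [c2 [d2 [B1 [B2 [B3 B4]]]]].
    have Hsplit : forall j : 'I_m, (nat_of_ord j < S n)%coq_nat -> (nat_of_ord j < n)%coq_nat \/ j = j0.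
    { intros j Hj. destruct (Nat.eq_dec (nat_of_ord j) n) as [E|E]; [right|left; lia].
      apply ord_inj. simpl. auto. }
    destruct (classic (exists c3 d3, c2 <= c3 /\ c3 < d3 /\ d3 <= d2 /\ constant_on (Bas c3 d3) (fun x => h x j0)))
      as [[c3 [d3 [C1 [C2 [C3 C4]]]]]|N].
    + exists c3, d3. split; [lra| split; [lra| split; [lra|]]].
      intros j Hj. destruct (Hsplit j Hj) as [Hj'|Ej]; [|rewrite Ej].
      * apply (GoodC_sub c1 d1); try lra. auto.
      * split; [apply (wmono_sub c2 d2); auto| left; auto].
    + exists c2, d2. split; [lra| split; [lra| split; [lra|]]].
      intros j Hj. destruct (Hsplit j Hj) as [Hj'|Ej]; [|rewrite Ej].
      * apply (GoodC_sub c1 d1); try lra. auto.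
      * split; auto. right. intros c' d' K1 K2 K3 K4. apply N. exists c', d'. auto.
Qed.
Lemma main_sub m (h : DA -> 'I_m -> DA) : embedding h -> G_delta (image_of h) ->
  forall c d, 0 < c -> c < d -> d < 1 ->
  exists c' d', c <= c' /\ c' < d' /\ d' <= d /\ exists j, good h j (Bas c' d').
Proof.
  intros Hemb HG c d H0 H1 H2.
  have Hemb' := Hemb. destruct Hemb' as [Hinj [Hc Ho]].
  have Hcj : forall j, cont (fun x => h x j) by (intro j; apply cont_coord; auto).
  destruct (step12 m h Hcj m (le_n m) c d H0 H1 H2) as [c' [d' [A1 [A2 [A3 A4]]]]].
  have A5 : forall j : 'I_m, GoodC c' d' (fun x => h x j).
  { intro j. apply A4. apply/ltP. apply ltn_ord. }
  exists c', d'. split; [lra| split; [lra| split; [lra|]]].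
  destruct (classic (exists j1, ~ constant_on (Bas c' d') (fun x => h x j1))) as [[j1 Hj1]|N].
  - destruct (classic (exists j2, j2 <> j1 /\ ~ constant_on (Bas c' d') (fun x => h x j2))) as [[j2 [Hj2 Hj2']]|N2].
    + exfalso.
      have NC : forall j, ~ constant_on (Bas c' d') (fun x => h x j) ->
          forall a, c' < a < d' -> h (mk a false) j <> h (mk a true) j.
      { intros j Hj a Ha. destruct (A5 j) as [M [P|P]]; [contradiction|].
        apply (twin_ne (fun x => h x j) c' d'); auto; lra. }
      apply (gd_contra m h c' d' j1 j2 Hemb HG); try lra.
      * intro E; apply Hj2; auto.
      * apply (A5 j1).
      * apply (A5 j2).
      * apply NC; auto.
      * apply NC; auto.
    + exists j1. split; [apply Bas_clopen; lra| split].
      * have Cst : forall j, j <> j1 -> constant_on (Bas c' d') (fun x => h x j).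
        { intros j Hj. apply NNPP; intro K. apply N2. exists j; auto. }
        have Inj : forall x y, Bas c' d' x -> Bas c' d' y -> h x j1 = h y j1 -> x = y.
        { intros x y Hx Hy E. apply Hinj. apply functional_extensionality. intro j.
          destruct (classic (j = j1)) as [->|Hj]; auto. apply (Cst j Hj); auto. }
        destruct (A5 j1) as [[M|M] _]; [left|right]; intros x y Hx Hy Hxy.
        -- destruct (M x y Hx Hy (or_introl Hxy)) as [K|K]; auto.
           have := Inj x y Hx Hy K. intro E. subst. destruct (lt_irrefl _ Hxy).
        -- destruct (M x y Hx Hy (or_introl Hxy)) as [K|K]; auto.
           have := Inj y x Hy Hx K. intro E. subst. destruct (lt_irrefl _ Hxy).
      * intros j Hj. apply NNPP; intro K. apply N2. exists j; auto.
  - exfalso.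
    apply (twins_ne ((c' + d') / 2) ltac:(lra)). apply Hinj. apply functional_extensionality. intro j.
    have Cj : constant_on (Bas c' d') (fun x => h x j).
    { apply NNPP; intro K; apply N; exists j; auto. }
    apply Cj; apply Bas_mk; lra.
Qed.
Definition kI (n : nat) : nat := Nat.sqrt n.
Definition iI (n : nat) : nat := Nat.sub n (Nat.mul (Nat.sqrt n) (Nat.sqrt n)).
Definition pI (n : nat) : R := (INR (iI n) + 1) / (2 * INR (kI n) + 3).
Definition qI (n : nat) : R := (INR (iI n) + 2) / (2 * INR (kI n) + 3).

Lemma div_lt_l a b D : 0 < D -> a < b * D -> a / D < b.
Proof.
  intros HD H. apply (Rmult_lt_reg_r D); auto. unfold Rdiv.
  rewrite Rmult_assoc Rinv_l; lra.
Qed.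
Lemma div_gt_l a b D : 0 < D -> b * D < a -> b < a / D.
Proof.
  intros HD H. apply (Rmult_lt_reg_r D); auto. unfold Rdiv.
  rewrite Rmult_assoc Rinv_l; lra.
Qed.

Lemma iI_le n : (iI n <= Nat.mul 2 (kI n))%coq_nat.
Proof.
  unfold iI, kI. destruct (Nat.sqrt_spec n (Nat.le_0_l n)) as [S1 S2].
  remember (Nat.sqrt n) as s. simpl in S2. nia.
Qed.

Lemma I_valid n : 0 < pI n /\ pI n < qI n /\ qI n < 1.
Proof.
  have Hi := iI_le n. have Hi' := le_INR _ _ Hi. rewrite mult_INR in Hi'. simpl in Hi'.
  have Hk := pos_INR (kI n). have Hii := pos_INR (iI n).
  unfold pI, qI. set D := 2 * INR (kI n) + 3. have HD : 0 < D by (unfold D; lra).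
  split; [|split].
  - unfold Rdiv. apply Rmult_lt_0_compat; [lra| apply Rinv_0_lt_compat; lra].
  - unfold Rdiv. apply Rmult_lt_compat_r; [apply Rinv_0_lt_compat; lra| lra].
  - apply div_lt_l; auto. unfold D; lra.
Qed.

Lemma I_dense u v : 0 <= u -> u < v -> v <= 1 -> exists n, u < pI n /\ qI n < v.
Proof.
  intros H0 H1 H2.
  destruct (archi ((v - u)/3) ltac:(lra)) as [k Hk].
  have Hk0 := pos_INR k.
  set D := 2 * INR k + 3. have HD : 0 < D by (unfold D; lra).
  have HDk : / D <= / (INR k + 1) by (apply Rinv_le_contravar; [lra| unfold D; lra]).
  destruct (archimed (u * D)) as [Z1 Z2].
  set z := up (u * D) in Z1 Z2.
  have Zpos : (0 < z)%Z by (apply lt_0_IZR; have := Rmult_le_pos u D H0 ltac:(lra); lra).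
  set i := Nat.sub (Z.to_nat z) 1.
  have Ei : INR i + 1 = IZR z.
  { unfold i. rewrite minus_INR; [|lia]. rewrite INR_IZR_INZ Z2Nat.id; [|lia]. simpl. lra. }
  have Hp : u < (INR i + 1) / D by (apply div_gt_l; auto; rewrite Ei; lra).
  have Hq : (INR i + 2) / D < v.
  { have E2 : (INR i + 2) / D = (INR i + 1) / D + / D by (unfold Rdiv; ring).
    have E3 : (INR i + 1) / D <= u + / D.
    { rewrite Ei. unfold Rdiv. apply (Rmult_le_reg_r D); auto.
      rewrite Rmult_plus_distr_r !Rmult_assoc Rinv_l; lra. }
    rewrite E2. lra. }
  have Hik : (i <= Nat.mul 2 k)%coq_nat.
  { have : (INR i + 2) < D.
    { apply (Rmult_lt_reg_r (/ D)); [apply Rinv_0_lt_compat; auto|].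
      rewrite Rinv_r; [|lra]. unfold Rdiv in Hq. lra. }
    unfold D. intro K. have : (i < Nat.add (Nat.mul 2 k) 1)%coq_nat.
    { apply INR_lt. rewrite plus_INR mult_INR. simpl. lra. }
    lia. }
  exists (Nat.add (Nat.mul k k) i).
  have Hs : Nat.sqrt (Nat.add (Nat.mul k k) i) = k by (apply Nat.sqrt_unique; nia).
  have Hk' : kI (Nat.add (Nat.mul k k) i) = k by exact Hs.
  have Hi' : iI (Nat.add (Nat.mul k k) i) = i by (unfold iI; rewrite Hs; lia).
  unfold pI, qI. rewrite Hk' Hi'. fold D. split; auto.
Qed.
Lemma open_interval U x : DA_open U -> U x ->
  exists u v, 0 <= u /\ u < v /\ v <= 1 /\ forall t s, u < t < v -> U (mk t s).
Proof.
  intros HU Hx. have Hb := px_bounds x. destruct (HU x Hx) as [HA HB].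
  destruct (sx x) eqn:Sx.
  - destruct HB as [B|[b [B1 B2]]].
    + exfalso; have := B (mk 1 false); intro K; have := le_px _ _ K.
      rewrite mk_px; [|apply in_d; lra]. intro K'. have := px1 x ltac:(lra). congruence.
    + exists (px x), (px b).
      have Hpb : px x < px b by (rewrite lt_iff in B1; destruct B1 as [K|[K1 [K2 K3]]]; [lra| congruence]).
      have := px_bounds b; intro Hbb.
      split; [lra| split; [lra| split; [lra|]]].
      intros t s Ht; have Ht1 : 0 < t < 1 by lra.
      apply B2.
      * left; rewrite lt_iff mk_px' //; left; lra.
      * rewrite lt_iff mk_px' //. left; lra.
  - destruct HA as [A|[a [A1 A2]]].
    + exfalso; have := A (mk 0 true); intro K; have := le_px _ _ K.
      rewrite mk_px; [|apply in_c; lra]. intro K'. have := px0 x ltac:(lra). congruence.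
    + exists (px a), (px x).
      have Hpa : px a < px x by (rewrite lt_iff in A1; destruct A1 as [K|[K1 [K2 K3]]]; [lra| congruence]).
      have := px_bounds a; intro Haa.
      split; [lra| split; [lra| split; [lra|]]].
      intros t s Ht; have Ht1 : 0 < t < 1 by lra.
      apply A2.
      * rewrite lt_iff mk_px' //; left; lra.
      * left; rewrite lt_iff mk_px' //. left; lra.
Qed.
Definition Mx (l : list (R * R)) : R := List.fold_right (fun x acc => Rmax (snd x) acc) (1/2) l.

Definition nx (gs : R -> R -> R * R) (n : nat) (l : list (R * R)) : R * R :=
  if excluded_middle_informative (forall x, List.In x l -> forall y,
        Bas (fst x) (snd x) y -> Bas (pI n) (qI n) y -> False)
  then gs (pI n) ((pI n + qI n) / 2) else gs (Mx l) ((Mx l + 1) / 2).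

Fixpoint LL (gs : R -> R -> R * R) (n : nat) : list (R * R) :=
  match n with O => nil | S n => List.app (LL gs n) (nx gs n (LL gs n) :: nil) end.

Definition JJ gs n := nx gs n (LL gs n).

Definition valid (x : R * R) := 0 < fst x /\ fst x < snd x /\ snd x < 1.

Definition GS (gs : R -> R -> R * R) (P : (DA -> Prop) -> Prop) :=
  forall c d, 0 < c -> c < d -> d < 1 -> c <= fst (gs c d) /\ fst (gs c d) < snd (gs c d) /\
    snd (gs c d) <= d /\ P (Bas (fst (gs c d)) (snd (gs c d))).

Lemma Mx_ge l x : List.In x l -> snd x <= Mx l.
Proof.
  induction l as [|y l IH]; simpl; [tauto|]. intros [<-|H]; [apply Rmax_l|].
  eapply Rle_trans; [apply IH; auto| apply Rmax_r].
Qed.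

Lemma Mx_lb l : 1/2 <= Mx l.
Proof. induction l as [|y l IH]; simpl; [lra|]. eapply Rle_trans; [apply IH| apply Rmax_r]. Qed.

Lemma Mx_lt l : (forall x, List.In x l -> snd x < 1) -> Mx l < 1.
Proof.
  induction l as [|y l IH]; simpl; intro H; [lra|]. apply Rmax_lub_lt; auto.
Qed.

Lemma Bas_lo c d y : c < d -> Bas c d y -> px y = c -> sx y = true.
Proof. unfold Bas; intros; des; auto; lra. Qed.
Lemma Bas_hi c d y : c < d -> Bas c d y -> px y = d -> sx y = false.
Proof. unfold Bas; intros; des; auto; lra. Qed.

Lemma nx_spec gs P n l : GS gs P -> (forall x, List.In x l -> valid x) ->
  valid (nx gs n l) /\ P (Bas (fst (nx gs n l)) (snd (nx gs n l))) /\
  forall x, List.In x l -> forall y, Bas (fst x) (snd x) y -> Bas (fst (nx gs n l)) (snd (nx gs n l)) y -> False.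
Proof.
  intros Hgs Hl. unfold nx. destruct (excluded_middle_informative _) as [Hd|Hd]; cbn [is_left].
  - have [I1 [I2 I3]] := I_valid n.
    destruct (Hgs (pI n) ((pI n + qI n) / 2) I1 ltac:(lra) ltac:(lra)) as [A1 [A2 [A3 A4]]].
    split; [unfold valid; repeat split; lra| split; auto].
    intros x Hx y B1 B2. apply (Hd x Hx y B1). apply (Bas_sub (pI n) (qI n) _ _ y A1 A2 ltac:(lra) B2).
  - have M1 := Mx_lb l. have M2 : Mx l < 1 by (apply Mx_lt; intros x Hx; apply Hl; auto).
    destruct (Hgs (Mx l) ((Mx l + 1) / 2) ltac:(lra) ltac:(lra) ltac:(lra)) as [A1 [A2 [A3 A4]]].
    split; [unfold valid; repeat split; lra| split; auto].
    intros x Hx y B1 B2. have [V1 [V2 V3]] := Hl x Hx. have M3 := Mx_ge l x Hx.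
    have P1 := Bas_px _ _ _ V2 B1. have P2 := Bas_px _ _ _ A2 B2.
    have S1 := Bas_hi _ _ _ V2 B1 ltac:(lra). have S2 := Bas_lo _ _ _ A2 B2 ltac:(lra).
    congruence.
Qed.

Lemma In_LL gs n x : List.In x (LL gs n) <-> exists i, (i < n)%coq_nat /\ x = JJ gs i.
Proof.
  induction n as [|n IH]; simpl.
  - split; [tauto| intros [i [Hi _]]; lia].
  - rewrite List.in_app_iff IH. simpl. split.
    + intros [[i [Hi E]]|[E|[]]]; [exists i; split; auto; lia| exists n; split; auto].
    + intros [i [Hi E]]. destruct (Nat.eq_dec i n) as [->|Ne]; [right; left; auto| left; exists i; split; auto; lia].
Qed.

Lemma LL_valid gs P : GS gs P -> forall n x, List.In x (LL gs n) -> valid x.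
Proof.
  intros Hgs n. induction n as [|n IH]; simpl; [tauto|].
  intros x Hx. apply List.in_app_iff in Hx. destruct Hx as [Hx|[<-|[]]]; auto.
  apply (nx_spec gs P n (LL gs n) Hgs IH).
Qed.

Lemma JJ_spec gs P n : GS gs P -> valid (JJ gs n) /\ P (Bas (fst (JJ gs n)) (snd (JJ gs n))) /\
  forall i, (i < n)%coq_nat -> forall y, Bas (fst (JJ gs i)) (snd (JJ gs i)) y -> Bas (fst (JJ gs n)) (snd (JJ gs n)) y -> False.
Proof.
  intros Hgs. destruct (nx_spec gs P n (LL gs n) Hgs (LL_valid gs P Hgs n)) as [A [B C]].
  split; auto. split; auto. intros i Hi y. apply C. apply In_LL. exists i; auto.
Qed.

Lemma JJ_dense gs P n : GS gs P ->
  (exists y, Bas (fst (JJ gs n)) (snd (JJ gs n)) y /\ pI n <= px y <= qI n) \/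
  (exists i, (i < n)%coq_nat /\ exists y, Bas (fst (JJ gs i)) (snd (JJ gs i)) y /\ Bas (pI n) (qI n) y).
Proof.
  intros Hgs. unfold JJ at 1 2 3 4. unfold nx. destruct (excluded_middle_informative _) as [Hd|Hd]; cbn [is_left].
  - left. have [I1 [I2 I3]] := I_valid n.
    destruct (Hgs (pI n) ((pI n + qI n) / 2) I1 ltac:(lra) ltac:(lra)) as [A1 [A2 [A3 A4]]].
    revert A1 A2 A3 A4. destruct (gs (pI n) ((pI n + qI n) / 2)) as [c' d']. simpl. intros A1 A2 A3 A4.
    exists (mk ((c' + d')/2) true). split.
    + apply Bas_mk; lra.
    + rewrite mk_px'; lra.
  - right. apply NNPP; intro K. apply Hd. intros x Hx y B1 B2.
    apply In_LL in Hx. destruct Hx as [i [Hi ->]]. apply K. exists i. split; auto. exists y; auto.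
Qed.
Theorem lemma2p5 (m : nat) (h : DA -> 'I_m -> DA) :
  (1 <= m)%N ->
  embedding h ->
  G_delta (image_of h) ->
  exists J : nat -> DA -> Prop,
    (forall n, clopen_interval (J n)) /\
    (forall n k, n <> k -> forall x, J n x -> J k x -> False) /\
    dense (fun x => exists n, J n x) /\
    (forall n, exists j : 'I_m, good h j (J n)).
Proof.
  intros _ Hemb HG.
  have G : forall c d, exists p : R * R, (0 < c -> c < d -> d < 1 ->
     c <= fst p /\ fst p < snd p /\ snd p <= d /\ exists j, good h j (Bas (fst p) (snd p))).
  { intros c d. destruct (classic (0 < c /\ c < d /\ d < 1)) as [[A [B C]]|N].
    - destruct (main_sub m h Hemb HG c d A B C) as [c' [d' [D1 [D2 [D3 D4]]]]].
      exists (c', d'). simpl. auto.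
    - exists (0, 0). intros; exfalso; tauto. }
  set gs := fun c d => proj1_sig (constructive_indefinite_description _ (G c d)).
  have Hgs : GS gs (fun K => exists j, good h j K).
  { intros c d A B C. exact (proj2_sig (constructive_indefinite_description _ (G c d)) A B C). }
  exists (fun n => Bas (fst (JJ gs n)) (snd (JJ gs n))).
  split; [|split; [|split]].
  - intro n. destruct (JJ_spec gs _ n Hgs) as [[V1 [V2 V3]] _]. apply Bas_clopen; lra.
  - intros n k Hnk x Hn Hk. destruct (Nat.lt_total n k) as [L|[L|L]]; [| contradiction |].
    + destruct (JJ_spec gs _ k Hgs) as [_ [_ D]]. apply (D n L x Hn Hk).
    + destruct (JJ_spec gs _ n Hgs) as [_ [_ D]]. apply (D k L x Hk Hn).
  - intros U HU [x Hx]. destruct (open_interval U x HU Hx) as [u [v [H0 [H1 [H2 H3]]]]].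
    destruct (I_dense u v H0 H1 H2) as [n [Hp Hq]].
    have [I1 [I2 I3]] := I_valid n.
    destruct (JJ_dense gs _ n Hgs) as [[y [B1 B2]]|[i [Hi [y [B1 B2]]]]].
    + exists y. split; [|exists n; auto].
      rewrite (mk_eta y). apply H3. lra.
    + exists y. split; [|exists i; auto].
      have := Bas_px _ _ _ I2 B2. intro P.
      rewrite (mk_eta y). apply H3. lra.
  - intro n. destruct (JJ_spec gs _ n Hgs) as [_ [P _]]. exact P.
Qed.
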